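(* Let $q$ be a prime power and $n \ge 2$ an integer. For any $\epsilon_1, \epsilon_2 > 0$ there is a constant $C = C(\epsilon_1,\epsilon_2,n,q)$ such that, if an $n$-tuple $(T_1,\ldots,T_n)$ of positive integers satisfies $T_1\cdots T_n > C$, then choosing a periodic sequence $s:\mathbb{N}_0^n \to \mathbb{F}_q$ of period $(T_1,\ldots,T_n)$ with each such sequence having equal probability $1/q^{T_1\cdots T_n}$, we have $$\mathcal{P}\left( L(s) > \sqrt{(1-\epsilon_1) T_1\cdots T_n/(n-1)} \right) > 1 - \epsilon_2.$$
   Context: An $n$-dimensional sequence over $\mathbb{F}_q$ is a map $s:\mathbb{N}_0^n \to \mathbb{F}_q$. A polynomial $P(\mathbf{X}) = \sum_{\mathbf{j}} a_{\mathbf{j}} X_1^{j_1}\cdots X_n^{j_n} \in \mathbb{F}_q[X_1,\ldots,X_n]$ acts on $s$ by $(Ps)(\mathbf{m}) = \sum_{\mathbf{j}} a_{\mathbf{j}} s(\mathbf{m}+\mathbf{j})$. Let $I(s) = \{P : Ps = 0\}$, an ideal. The linear complexity $L(s)$ is the dimension of $\mathbb{F}_q[X_1,\ldots,X_n]/I(s)$ over $\mathbb{F}_q$. The sequence $s$ is periodic with period $(T_1,\ldots,T_n)$ if $X_i^{T_i}-1 \in I(s)$ for all $i$, i.e. $s(\mathbf{m}+T_i\mathbf{e}_i)=s(\mathbf{m})$ for all $\mathbf{m}$ and $i$; such a sequence is determined by its values on $\{(m_1,\ldots,m_n): 0 \le m_i \le T_i-1\}$, so there are $q^{T_1\cdots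 T_n}$ of them. *)

(* Defs.v *)
From Stdlib Require Import Reals ClassicalEpsilon.
From HB Require Import structures.
From mathcomp Require Import all_boot all_algebra all_field.
From mathcomp Require Import mpoly.

Set Implicit Arguments.
Unset Strict Implicit.
Unset Printing Implicit Defensive.

Import GRing.Theory.
Local Open Scope ring_scope.

(* An n-dimensional sequence over F: a map N_0^n -> F, with N_0^n = 'X_{1..n}
   (the monoid of multi-indices of multinomials). *)
Definition nseq_ (n : nat) (F : Type) := 'X_{1..n} -> F.

Definition act (n : nat) (F : nzRingType) (P : {mpoly F[n]}) (s : nseq_ n F)
  : nseq_ n F :=
  fun m => \sum_(mo <- msupp P) P@_mo * s (m + mo)%MM.

Definition in_I (n : nat) (F : nzRingType) (s : nseq_ n F) (P : {mpoly F[n]}) :=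
  forall m, act P s m = 0.

(* dim_F F[X]/I(s) >= k : there are k polynomials that are linearly
   independent modulo I(s). *)
Definition quot_dim_ge (n : nat) (F : fieldType) (s : nseq_ n F) (k : nat) :=
  exists P : 'I_k -> {mpoly F[n]},
    forall c : 'I_k -> F, in_I s (\sum_(i < k) c i *: P i) -> forall i, c i = 0.

(* L(s) > x  (L(s) = dim_F F[X]/I(s), possibly infinite). *)
Definition linear_complexity_gt (n : nat) (F : fieldType) (s : nseq_ n F)
  (x : R) : Prop :=
  exists k : nat, Rlt x (INR k) /\ quot_dim_ge s k.

Definition box (n : nat) (T : 'I_n -> nat) := {dffun forall i : 'I_n, 'I_(T i)}.

Definition periodic_ext (n : nat) (F : Type) (T : 'I_n -> nat)
  (hT : forall i, (0 < T i)%N) (p : {ffun box T -> F}) : nseq_ n F :=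
  fun m => p (@finfun 'I_n (fun i => 'I_(T i))
                (fun i => Ordinal (@ltn_pmod (m i) (T i) (hT i)))).

Definition pbool (P : Prop) : bool :=
  if excluded_middle_informative P then true else false.

Definition prob_lc_gt (n : nat) (F : finFieldType) (T : 'I_n -> nat)
  (hT : forall i, (0 < T i)%N) (x : R) : R :=
  Rdiv (INR #|[set p : {ffun box T -> F} |
            pbool (linear_complexity_gt (periodic_ext hT p) x)]|)
       (INR (#|F| ^ (\prod_(i < n) T i))%N).

(* Main.v *)
Require Import Defs.
From Stdlib Require Import Reals Lra Psatz ClassicalEpsilon.
From HB Require Import structures.
From mathcomp Require Import all_boot all_algebra all_field.
From mathcomp Require Import mpoly.
From mathcomp Require Import all_order zify.
Set Implicit Arguments. Unset Strict Implicit. Unset Printing Implicit Defensive.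

Lemma comb_aux (n : nat) : forall (T : nat -> nat) a k,
  (forall i, i < n -> 0 < T i) -> 0 < a -> (a = 1 \/ a < k) -> 0 < k ->
  k <= a * \prod_(i < n) T i ->
  exists u : nat -> nat, (forall i, i < n -> 0 < u i <= T i) /\
    k <= a * \prod_(i < n) u i /\
    (a * \prod_(i < n) T i <= k * ((\prod_(i < n) (T i - u i).+1) + 1) \/
     (a * \prod_(i < n) T i <= 2 * k * \prod_(i < n) (T i - u i).+1 /\
      (if a == 1 then 3 else 2) <= n)).
Proof.
elim: n => [|n IH] T a k HT Ha Hak Hk Hka.
  rewrite !big_ord0 in Hka *; exists (fun _ => 1); rewrite !big_ord0; split => //; split; first by lia.
  left; lia.
rewrite big_ord_recl in Hka.
set P := \prod_(i < n) T (bump 0 i) in Hka.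
have HP : 0 < P.
  rewrite /P; elim/big_ind: _ => //; [move=> x y; lia| move=> i _; apply: HT; exact: ltn_ord].
have Ht : 0 < T 0 by apply: HT.
case: (leqP k (a * T 0)) => Hkat.
- pose j := (k - 1) %/ a + 1.
  have Hj1 : a * (j - 1) <= k - 1.
    rewrite /j addnK mulnC; exact: leq_divM.
  have Hj2 : k <= a * j.
    rewrite /j mulnDr muln1 mulnC.
    have := ltn_ceil (k - 1) Ha. lia.
  have Hjt : j <= T 0.
    rewrite /j; have : (k - 1) %/ a < T 0.
      rewrite ltn_divLR //; lia.
    lia.
  have Hj0 : 0 < j by lia.
  exists (fun i => if i == 0 then j else 1); split.
    move=> [|i] Hi /=; [lia | have := HT i.+1 Hi; lia].
  rewrite !big_ord_recl /=.
  have E1 : \prod_(i < n) 1 = 1 by rewrite big1_eq.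
  have E2 : \prod_(i < n) (T (bump 0 i) - 1).+1 = P.
    rewrite /P; apply: eq_bigr => i _; have := HT (bump 0 i); rewrite /bump leq0n add1n /=; have := ltn_ord i; lia.
  rewrite E1 E2 -/P muln1; split => //.
  case: (eqVneq a 1) => [Ha1|Ha1].
    subst a. have Hjk : j = k by rewrite /j divn1 subn1 addn1 prednK.
    left. rewrite Hjk.
    have : T 0 <= k * (T 0 - k).+1 by nia.
    nia.
  have {}Hak : a < k by case: Hak => // Ha1'; rewrite Ha1' eqxx in Ha1.
  have Hj2' : 2 <= j.
    rewrite /j; have : 1 <= (k - 1) %/ a by rewrite divn_gt0; lia.
    lia.
  case: (ltngtP P 1) => HP1; [lia| |].
  + have Hn : 0 < n.
      case: (posnP n) => // Hn0; move: HP1; rewrite /P Hn0 big_ord0; done.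
    right. split; last by lia.
    have Hkey : T 0 <= 2 * (j - 1) * (T 0 - j).+1 by nia.
    set x := (T 0 - j).+1 in Hkey *.
    have H3 : a * (j - 1) * (x * P) <= k * (x * P) by apply: leq_mul => //; lia.
    have H4 : T 0 * (a * P) <= 2 * (j - 1) * x * (a * P) by rewrite leq_mul2r Hkey orbT.
    lia.
  + left. rewrite HP1.
    have Hkey : T 0 <= (j - 1) * (T 0 - j).+2 by nia.
    have H3 : a * (j - 1) * (T 0 - j).+2 <= k * (T 0 - j).+2 by apply: leq_mul => //; lia.
    have H4 : T 0 * a <= (j - 1) * (T 0 - j).+2 * a by rewrite leq_mul2r Hkey orbT.
    lia.
- have Hka' : k <= a * T 0 * \prod_(i < n) T i.+1 by rewrite -mulnA.
  have Hat : 0 < a * T 0 by rewrite muln_gt0 Ha Ht.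
  have [u [Hu [Hku Hb]]] := IH (fun i => T i.+1) (a * T 0) k
     (fun i Hi => HT i.+1 Hi) Hat (or_intror Hkat) Hk Hka'.
  exists (fun i => if i is i'.+1 then u i' else T 0); split.
    by move=> [|i] Hi //=; [rewrite Ht leqnn| apply: Hu].
  rewrite !big_ord_recl /= subnn mul1n.
  rewrite (_ : \prod_(i < n) u (0 + i) = \prod_(i < n) u i) //.
  rewrite (_ : \prod_(i < n) T (bump 0 i) = \prod_(i < n) T i.+1) //.
  rewrite (_ : \prod_(i < n) (T (bump 0 i) - u (0 + i)).+1 = \prod_(i < n) (T i.+1 - u i).+1) //.
  split; first lia.
  case: Hb => Hb; [left; lia| right; case: Hb => Hb1 Hb2; split; first lia].
  move: Hb2; case: (_ == 1); case: (_ == 1); lia.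
Qed.

Lemma comb_main n (T : 'I_n -> nat) (hT : forall i, 0 < T i) k K :
  2 <= n -> 0 < k -> (n - 1) * k * (k + K + 1) <= \prod_(i < n) T i ->
  exists u : 'I_n -> nat, (forall i, 0 < u i <= T i) /\ k <= \prod_(i < n) u i /\
    k + K <= \prod_(i < n) (T i - u i).+1.
Proof.
case: n T hT => [|[|n']] // T hT _ Hk HN.
pose Tn j := T (inord j).
have ETn : forall i : 'I_n'.+2, Tn i = T i by move=> i; rewrite /Tn inord_val.
have EP : \prod_(i < n'.+2) Tn i = \prod_i T i by apply: eq_bigr => i _; rewrite ETn.
have HTn : forall i, i < n'.+2 -> 0 < Tn i.
  by move=> i Hi; rewrite /Tn.
have Hkn : k <= 1 * \prod_(i < n'.+2) Tn i.
  rewrite mul1n EP; apply: leq_trans HN; nia.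
have [u [Hu [Hku Hb]]] := comb_aux HTn (ltnSn 0) (or_introl erefl) Hk Hkn.
exists (fun i => u i); split.
  by move=> i; rewrite -ETn; apply: Hu.
rewrite mul1n in Hku; split => //.
have ER : \prod_(i < n'.+2) (Tn i - u i).+1 = \prod_(i < n'.+2) (T i - u i).+1.
  by apply: eq_bigr => i _; rewrite ETn.
rewrite !mul1n EP ER /= in Hb.
move: HN Hb; rewrite subn1 /=.
set N := \prod_(i < _) T i; set R := \prod_(i < _) _.
move=> HN [Hb|[Hb Hn]].
- have : k * (k + K + 1) <= k * (R + 1).
    apply: (leq_trans _ Hb); apply: (leq_trans _ HN); nia.
  rewrite leq_pmul2l //; lia.
- have : k * (2 * (k + K + 1)) <= k * (2 * R).
    apply: (@leq_trans (2 * k * R)); last by lia.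
    apply: (leq_trans _ Hb); apply: (leq_trans _ HN); nia.
  rewrite leq_pmul2l //; lia.
Qed.

Import GRing.Theory Order.TTheory.
Definition mi n (f : 'I_n -> nat) : 'X_{1..n} := [multinom f i | i < n].

Lemma mi_inj n (f f' : 'I_n -> nat) : mi f = mi f' -> forall i, f i = f' i.
Proof. by move/mnmP => H i; have := H i; rewrite !mnmE. Qed.

Definition At n (u : 'I_n -> nat) := {dffun forall i : 'I_n, 'I_(u i)}.
Definition Rt n (T u : 'I_n -> nat) := {dffun forall i : 'I_n, 'I_((T i - u i).+1)}.

Lemma posP n (T u : 'I_n -> nat) (hu : forall i, u i <= T i) (r : Rt T u) (a : At u) i :
  (r i + a i < T i)%N.
Proof. have := ltn_ord (r i); have := ltn_ord (a i); have := hu i; lia. Qed.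

Definition pos n (T u : 'I_n -> nat) (hu : forall i, u i <= T i) (r : Rt T u) (a : At u)
  : box T := @finfun 'I_n (fun i => 'I_(T i)) (fun i => Ordinal (posP hu r a i)).

Lemma pos_eq n (T u : 'I_n -> nat) (hu : forall i, u i <= T i) r a r' a' :
  pos hu r a = pos hu r' a' -> forall i, (r i + a i = r' i + a' i)%N.
Proof. by move=> E i; have := congr1 (fun f : box T => (f i : nat)) E; rewrite /= !ffunE. Qed.

Lemma pos_inj n (T u : 'I_n -> nat) (hu : forall i, u i <= T i) a :
  injective (fun r => pos hu r a).
Proof.
move=> r r' /pos_eq E; apply/ffunP => i; apply/val_inj/eqP.
by rewrite /= -(eqn_add2r (a i)) E.
Qed.

Lemma ex_max (I : finType) (d : Order.disp_t) (X : orderType d) (P : pred I) (f : I -> X) i0 :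
  P i0 -> exists i, P i /\ forall j, P j -> (f j <= f i)%O.
Proof. by move=> Pi0; case: (arg_maxP f Pi0) => i Pi Hi; exists i. Qed.

Lemma ex_min (I : finType) (d : Order.disp_t) (X : orderType d) (P : pred I) (f : I -> X) i0 :
  P i0 -> exists i, P i /\ forall j, P j -> (f i <= f j)%O.
Proof. by move=> Pi0; case: (arg_minP f Pi0) => i Pi Hi; exists i. Qed.

Definition mR n (T u : 'I_n -> nat) (r : Rt T u) := mi (fun i => (r i : nat)).
Definition mA n (u : 'I_n -> nat) (a : At u) := mi (fun i => (a i : nat)).

Lemma mA_inj n (u : 'I_n -> nat) : injective (@mA n u).
Proof. move=> a a' /mi_inj E; apply/ffunP => i; apply/val_inj; exact: E. Qed.

Lemma pos_mi n (T u : 'I_n -> nat) (hu : forall i, u i <= T i) r a r' a' :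
  pos hu r a = pos hu r' a' -> (mR r + mA a = mR r' + mA a')%MM.
Proof. move/pos_eq => E; apply/mnmP => i; rewrite !mnmDE !mnmE; exact: E. Qed.

Lemma count_Sc (F : finFieldType) n (T u : 'I_n -> nat) (hu : forall i, u i <= T i)
  k (g : 'I_k -> At u) (ginj : injective g) (c : 'I_k -> F) i0 (ci0 : c i0 != 0%R) :
  #|[set p : {ffun box T -> F} |
      [forall r : Rt T u, (\sum_(i < k) c i * p (pos hu r (g i)) == 0)%R]]|
  <= #|F| ^ (#|box T| - #|Rt T u|).
Proof.
Local Open Scope ring_scope.
set X := [set p | _].
have [ist [cis Hmax]] := ex_max (P := fun i => c i != 0) (fun i => mA (g i)) ci0.
set L := [set pos hu r (g ist) | r in Rt T u].
have cardL : #|L| = #|Rt T u| by rewrite card_imset //; apply: pos_inj.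
pose pi (p : {ffun box T -> F}) := [ffun b => if b \in L then 0 else p b].
have pi_inj : {in X &, injective pi}.
  move=> p1 p2; rewrite !inE => /forallP E1 /forallP E2 Epi.
  have off : forall b, b \notin L -> p1 b = p2 b.
    move=> b bL; have := congr1 (fun f : {ffun box T -> F} => f b) Epi; rewrite /= !ffunE.
    by rewrite (negbTE bL).
  apply/ffunP => b; apply/eqP; apply/negPn/negP => Hb.
  have bL : b \in L by apply: contraNT Hb => /off ->.
  case/imsetP: bL => rb _ Eb.
  have Yb : p1 (pos hu rb (g ist)) != p2 (pos hu rb (g ist)) by rewrite -Eb.
  have [r0 [Y0 Hmin]] := ex_min (P := fun r => p1 (pos hu r (g ist)) != p2 (pos hu r (g ist)))
      (fun r => mR r) Yb.
  have H1 := E1 r0; have H2 := E2 r0.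
  rewrite (bigD1 ist) //= in H1; rewrite (bigD1 ist) //= in H2.
  have Z : forall i, i != ist -> c i * p1 (pos hu r0 (g i)) = c i * p2 (pos hu r0 (g i)).
    move=> i iis; case: (eqVneq (c i) 0) => [-> |ci]; first by rewrite !mul0r.
    congr (_ * _).
    case: (boolP (pos hu r0 (g i) \in L)) => [/imsetP [r' _ Er'] | ?]; last exact: off.
    rewrite Er'; apply/eqP; apply/negPn/negP => Y'.
    have lt1 : (mA (g i) < mA (g ist))%O.
      rewrite lt_neqAle Hmax // andbT.
      by apply: contra iis => /eqP /mA_inj /ginj ->.
    have := pos_mi Er' => Emi.
    have : ((mR r0 + mA (g i))%MM < (mR r0 + mA (g ist))%MM)%O by rewrite ltmc_add2r.
    rewrite Emi ltmc_add2l => lt2.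
    by have := Hmin _ Y'; rewrite leNgt lt2.
  rewrite (eq_bigr (fun i => c i * p2 (pos hu r0 (g i)))) in H1; last by move=> i; apply: Z.
  move/eqP: H1 => H1; move/eqP: H2 => H2.
  have : c ist * p1 (pos hu r0 (g ist)) = c ist * p2 (pos hu r0 (g ist)).
    by apply: (addIr (\sum_(i < k | i != ist) c i * p2 (pos hu r0 (g i)))); rewrite H1 H2.
  move/(mulfI cis) => E; by rewrite E eqxx in Y0.
rewrite -(card_in_imset pi_inj).
have sub : pi @: X \subset pffun_on (0 : F) (~: L) [set: F].
  apply/subsetP => f /imsetP [p _ ->]; apply/pffun_onP; split.
    apply/subsetP => b; rewrite inE ffunE inE; by case: (b \in L); rewrite ?eqxx.
  by move=> y _; rewrite inE.
apply: (leq_trans (subset_leq_card sub)).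
by rewrite card_pffun_on cardsT cardsCs setCK cardL.
Qed.

Lemma act_ext n (F : nzRingType) (P : {mpoly F[n]}) (s : nseq_ n F) m (r : seq 'X_{1..n}) :
  uniq r -> {subset msupp P <= r} ->
  act P s m = (\sum_(mo <- r) P@_mo * s (m + mo)%MM)%R.
Proof.
Local Open Scope ring_scope.
move=> ur sub; rewrite /act [RHS](bigID (fun mo => mo \in msupp P)) /=.
rewrite [X in _ = _ + X]big1 ?addr0; last first.
  by move=> mo; rewrite -mcoeff_eq0 => /eqP ->; rewrite mul0r.
rewrite -[in RHS]big_filter; apply: perm_big.
apply: uniq_perm; first exact: msupp_uniq.
  exact: filter_uniq.
by move=> x; rewrite mem_filter; case: (boolP (x \in msupp P)) => // /sub ->.
Qed.

Lemma act_comb n (F : nzRingType) k (c : 'I_k -> F) (w : 'I_k -> 'X_{1..n})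
  (winj : injective w) (s : nseq_ n F) m :
  act (\sum_(i < k) c i *: 'X_[w i]) s m = (\sum_(i < k) c i * s (m + w i)%MM)%R.
Proof.
Local Open Scope ring_scope.
rewrite (@act_ext _ _ _ _ _ [seq w i | i <- index_enum 'I_k]).
- rewrite big_map; apply: eq_bigr => j _; congr (_ * _).
  rewrite raddf_sum /= (bigD1 j) //= mcoeffZ mcoeffX eqxx mulr1 big1 ?addr0 //.
  by move=> i ij; rewrite mcoeffZ mcoeffX (inj_eq winj) (negbTE ij) mulr0.
- rewrite map_inj_uniq //; exact: index_enum_uniq.
- move=> x /msupp_sum_le /flattenP [y /mapP [i _ ->]] /msuppZ_le.
  rewrite msuppX inE => /eqP ->; apply: map_f; exact: mem_index_enum.
Qed.

Lemma card_dffun_ord n (f : 'I_n -> nat) :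
  #|{dffun forall i : 'I_n, 'I_(f i)}| = \prod_(i < n) f i.
Proof.
rewrite card_dep_ffun foldrE big_map big_enum /=; apply: eq_bigr => i _; exact: card_ord.
Qed.

Lemma periodic_pos (F : Type) n (T u : 'I_n -> nat) (hT : forall i, (0 < T i)%N)
  (hu : forall i, (u i <= T i)%N) (p : {ffun box T -> F}) r a :
  periodic_ext hT p (mR r + mA a)%MM = p (pos hu r a).
Proof.
rewrite /periodic_ext; congr (p _); apply/ffunP => i; apply: val_inj.
rewrite !ffunE /= mnmDE !mnmE modn_small //; exact: posP.
Qed.

Lemma real_final (G B Q QK : nat) (eps2 : R) : (0 < Q)%N -> (Q <= G + B)%N ->
  (B * QK <= Q)%N -> Rlt 1 (Rmult (INR QK) eps2) -> Rlt 0 eps2 ->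
  Rgt (Rdiv (INR G) (INR Q)) (Rminus 1 eps2).
Proof.
move=> /ssrnat.ltP Q0 /ssrnat.leP H1 /ssrnat.leP H2 H3 H4.
have HQ : Rlt 0 (INR Q) by apply: lt_0_INR.
have E1 : Rle (INR Q) (Rplus (INR G) (INR B)) by rewrite -plus_INR; apply: le_INR.
have E2 : Rle (Rmult (INR B) (INR QK)) (INR Q) by rewrite -mult_INR; apply: le_INR.
have HB : Rle 0 (INR B) by apply: pos_INR.
apply: Rlt_gt.
apply: (Rmult_lt_reg_r (INR Q)) => //.
rewrite /Rdiv Rmult_assoc Rinv_l; last by apply: Rgt_not_eq.
rewrite Rmult_1_r.
have E3 : Rle (Rmult (Rmult (INR B) (INR QK)) eps2) (Rmult (INR Q) eps2).
  by apply: Rmult_le_compat_r => //; apply: Rlt_le.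
have E4 : Rlt (INR B) (Rmult (INR Q) eps2).
  case: (Req_dec (INR B) 0) => HB0.
    rewrite HB0; apply: Rmult_lt_0_compat => //.
  have HBp : Rlt 0 (INR B) by lra.
  have : Rlt (INR B) (Rmult (INR B) (Rmult (INR QK) eps2)).
    rewrite -{1}(Rmult_1_r (INR B)); apply: Rmult_lt_compat_l => //.
  rewrite -Rmult_assoc; lra.
lra.
Qed.

Lemma card_bigcup_le (T I : finType) (P : pred I) (A : I -> {set T}) :
  (#|\bigcup_(i | P i) A i| <= \sum_(i | P i) #|A i|)%N.
Proof.
elim/big_rec2: _ => [|i m U _ le]; first by rewrite cards0.
by rewrite (leq_trans (leq_card_setU _ _).1) // leq_add2l.
Qed.

Local Close Scope ring_scope.

Theorem mainTheorem4 :
  forall (F : finFieldType) (n : nat), (2 <= n)%N ->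
  forall eps1 eps2 : R, Rlt 0 eps1 -> Rlt 0 eps2 ->
  exists C : R,
    forall (T : 'I_n -> nat) (hT : forall i, (0 < T i)%N),
      Rlt C (INR (\prod_(i < n) T i)%N) ->
      Rgt (prob_lc_gt F hT
             (sqrt (Rdiv (Rmult (Rminus 1 eps1) (INR (\prod_(i < n) T i)%N))
                         (INR (n - 1)%N))))
          (Rminus 1 eps2).
Proof.
move=> F n hn eps1 eps2 he1 he2.
have [M0 HM0] := INR_unbounded (Rinv eps1).
pose M := (M0 + 2)%N.
have HM2 : (2 <= M)%N by rewrite /M; lia.
have HM : Rle 1 (Rmult (INR M) eps1).
  have : Rle (INR M0) (INR M) by apply: le_INR; apply/ssrnat.leP; rewrite /M; lia.
  have := Rinv_l eps1 (Rgt_not_eq _ _ he1).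
  nra.
have [K HK] := INR_unbounded (Rinv eps2).
have HK2 : Rlt 1 (Rmult (INR (2 ^ K)) eps2).
  have : Rle (INR K) (INR (2 ^ K)) by apply: le_INR; apply/ssrnat.leP; apply: ltnW; apply: ltn_expl.
  have := Rinv_l eps2 (Rgt_not_eq _ _ he2).
  nra.
pose D := (n - 1)%N.
pose K' := (2 * M + (M - 1) * (K + 1))%N.
exists (INR (M * D * (K' * K'))).
move=> T hT HC.
set N := (\prod_(i < n) T i)%N in HC *.
have HC' : (M * D * (K' * K') < N)%N by apply/ssrnat.ltP; apply: INR_lt.
have HN0 : (0 < N)%N by apply: prodn_gt0.
have HD : (1 <= D)%N by rewrite /D; lia.
have exk : exists k, ((M - 1) * N < M * D * (k * k))%N.
  exists N.+1; nia.
case: (ex_minnP exk) => k Hk1 Hk2.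
have Hkpos : (0 < k)%N by case: k Hk1 {Hk2} => //; rewrite muln0; lia.
have Hkm : (M * D * ((k - 1) * (k - 1)) <= (M - 1) * N)%N.
  rewrite leqNgt; apply/negP => /Hk2; lia.
have HkK : (K' < k)%N.
  rewrite ltnNge; apply/negP => Hle.
  have : (M * D * (k * k) <= M * D * (K' * K'))%N by apply: leq_mul => //; apply: leq_mul.
  nia.
have Hmain : (D * k * (k + K + 1) <= N)%N.
  have H1 : ((M - 1) * (k * (k + K + 1)) <= M * ((k - 1) * (k - 1)))%N.
    rewrite /K' in HkK; nia.
  have H2 : ((M - 1) * (D * k * (k + K + 1)) <= (M - 1) * N)%N.
    apply: leq_trans Hkm.
    have := leq_mul (leqnn D) H1; nia.
  by rewrite leq_pmul2l in H2; lia.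
have [u [Hu [Hku HR]]] := @comb_main n T hT k K hn Hkpos Hmain.
have hu : forall i, (u i <= T i)%N by move=> i; case/andP: (Hu i).
have hkA : (k <= #|At u|)%N by rewrite card_dffun_ord.
pose g (i : 'I_k) : At u := enum_val (widen_ord hkA i).
have ginj : injective g.
  by move=> i j /enum_val_inj /(congr1 val) /= /val_inj.
pose S (c : {ffun 'I_k -> F}) := [set p : {ffun box T -> F} |
      [forall r : Rt T u, (\sum_(i < k) c i * p (pos hu r (g i)) == 0)%R]].
pose Bad := \bigcup_(c : {ffun 'I_k -> F} | c != [ffun=> 0%R]) S c.
set q := #|F|.
have Hq : (1 < q)%N by apply: card_finNzRing_gt1.
have cardbox : #|box T| = N by rewrite /box card_dffun_ord.
have cardRt : #|Rt T u| = (\prod_(i < n) (T i - u i).+1)%N by rewrite /Rt card_dffun_ord.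
have RleN : (#|Rt T u| <= N)%N.
  rewrite cardRt; apply: leq_prod => i _; have := Hu i; lia.
have HBad : (#|Bad| <= q ^ k * q ^ (N - #|Rt T u|))%N.
  apply: leq_trans (card_bigcup_le _ _) _.
  apply: (@leq_trans (\sum_(c : {ffun 'I_k -> F}) q ^ (N - #|Rt T u|))).
    rewrite [X in (_ <= X)%N](bigID (fun c => c != [ffun=> 0%R])) /=; apply: leq_trans (leq_addr _ _).
    apply: leq_sum => c cnz.
    case: (pickP (fun i => c i != 0%R)) => [i0 Hi0 | H0].
      by rewrite -cardbox; apply: (count_Sc hu ginj Hi0).
    exfalso; move/eqP: cnz; apply; apply/ffunP => i; rewrite !ffunE.
    by move: (H0 i) => /negbFE /eqP.
  by rewrite sum_nat_const card_ffun card_ord.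
have HBadK : (#|Bad| * q ^ K <= q ^ N)%N.
  apply: leq_trans (leq_mul HBad (leqnn _)) _.
  rewrite -!expnD leq_exp2l //; lia.
set y := Rdiv _ _.
set x := sqrt _.
have Hx : Rlt x (INR k).
  have HDr : Rlt 0 (INR D) by apply: lt_0_INR; apply/ssrnat.ltP.
  have HMr : Rlt 0 (INR M) by apply: lt_0_INR; apply/ssrnat.ltP; lia.
  have Hk1r : Rlt (INR ((M - 1) * N)) (INR (M * D * (k * k))) by apply: lt_INR; apply/ssrnat.ltP.
  rewrite !mult_INR minus_INR in Hk1r; last by apply/ssrnat.leP; lia.
  have HNr : Rle 0 (INR N) by apply: pos_INR.
  have Hkr : Rlt 0 (INR k) by apply: lt_0_INR; apply/ssrnat.ltP.
  have Hy : Rlt y (Rmult (INR k) (INR k)).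
    rewrite /y; apply: (Rmult_lt_reg_r (INR D)) => //.
    rewrite /Rdiv Rmult_assoc Rinv_l; last by apply: Rgt_not_eq.
    rewrite Rmult_1_r; simpl in Hk1r.
    apply: (Rmult_lt_reg_l (INR M)) => //.
    have : Rle (Rmult (INR M) (Rminus 1 eps1)) (Rminus (INR M) 1) by nra.
    nra.
  rewrite /x; case: (Rle_lt_dec y 0) => Hy0.
    by rewrite sqrt_neg_0.
  rewrite -(sqrt_square (INR k)); last by apply: Rlt_le.
  apply: sqrt_lt_1_alt; lra.
have HG : (~: Bad \subset [set p : {ffun box T -> F} |
            pbool (linear_complexity_gt (periodic_ext hT p) x)])%N.
  apply/subsetP => p; rewrite !inE => pBad.
  rewrite /pbool; case: excluded_middle_informative => // Hn; exfalso; apply: Hn.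
  exists k; split => //.
  exists (fun i => 'X_[mA (g i)]) => c0 Hc0 i.
  apply/eqP; apply/negPn/negP => ci.
  move/negP: pBad; apply; apply/bigcupP; exists (finfun c0).
    by apply/eqP => /ffunP /(_ i); rewrite !ffunE => E; rewrite E eqxx in ci.
  rewrite inE; apply/forallP => r; apply/eqP.
  have := Hc0 (mR r); rewrite act_comb; last first.
    by move=> i1 i2 /mA_inj /ginj.
  move=> H; apply: etrans H; apply: eq_bigr => j _; rewrite ffunE.
  by rewrite (periodic_pos hT hu).
rewrite /prob_lc_gt -/N.
apply: (real_final (B := #|Bad|) (QK := q ^ K)).
- by rewrite expn_gt0; lia.
- rewrite -cardbox -card_ffun.
  apply: (@leq_trans (#|~: Bad| + #|Bad|)); first by rewrite addnC cardsC.
  rewrite leq_add2r; exact: subset_leq_card HG.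
- by rewrite -cardbox; rewrite cardbox.
- have : Rle (INR (2 ^ K)) (INR (q ^ K)).
    apply: le_INR; apply/ssrnat.leP.
    by case: (posnP K) => [->|K0] //; rewrite leq_exp2r // ltnW.
  nra.
- exact: he2.
Qed.
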